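(* Let $h,n\geq 2$ and let $V\leq S_h$ contain a complete intransitive subgroup of $S_h$ in $k$ blocks, for some $2\leq k\leq\min\{h,n!\}$. Then $V\times\{id\}$ is an anonymity group with respect to $(h,n)$.
   Context: For a partition $\{H_1,\dots,H_k\}$ of $H=[h]$ into $k$ nonempty parts, the subgroup $S_{H_1}\times\cdots\times S_{H_k}\leq S_h$ (permutations preserving each $H_i$) is called a complete intransitive subgroup of $S_h$ in $k$ blocks. Permutations compose as $(\sigma\tau)(x)=\sigma(\tau(x))$. Let $G=S_h\times S_n$ and $\mathcal{P}=(S_n)^h$ (preference profiles), with action $(p^{(\varphi,\psi)})_i=\psi\,p_{\varphi^{-1}(i)}$. A social preference function (SPF) is any $F:\mathcal{P}\to S_n$; its symmetry group is $G(F)=\{(\varphi,\psi)\in G: F(p^{(\varphi,\psi)})=\psi F(p)\ \forall p\}$ and its anonymity group is $G_1(F)=G(F)\cap(S_h\times\{id\})$. A subgroup $U\leq S_h\times\{id\}$ is an anonymity group with respect to $(h,n)$ if $U=G_1(F)$ for some SPF $F$. *)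

(* Defs.v *)
From mathcomp Require Import all_boot all_fingroup.
Set Implicit Arguments. Unset Strict Implicit. Unset Printing Implicit Defensive.
Import GroupScope.

(* Function-composition order: pcomp s t = s o t, i.e. (pcomp s t) x = s (t x).
   (MathComp's perm product is (s * t) x = t (s x).) *)
Definition pcomp (T : finType) (s t : {perm T}) : {perm T} := (t * s)%g.

Definition profile (h n : nat) := {ffun 'I_h -> 'S_n}.

Definition SPF (h n : nat) := profile h n -> 'S_n.

Definition act (h n : nat) (phi : 'S_h) (psi : 'S_n) (p : profile h n)
  : profile h n := [ffun i => pcomp psi (p (phi^-1 i))].

Definition symmetry_group (h n : nat) (F : SPF h n) : {set 'S_h * 'S_n} :=
  [set g | [forall p : profile h n, F (act g.1 g.2 p) == pcomp g.2 (F p)]].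

Definition anonymity_group (h n : nat) (F : SPF h n) : {set 'S_h * 'S_n} :=
  symmetry_group F :&: setX [set: 'S_h] [set 1].

Definition is_anonymity_group (h n : nat) (U : {set 'S_h * 'S_n}) : Prop :=
  exists F : SPF h n, U = anonymity_group F.

(* Complete intransitive subgroup S_{H_1} x ... x S_{H_k} for a partition P
   of [h]: permutations preserving each block. *)
Definition complete_intransitive (h : nat) (P : {set {set 'I_h}}) : {set 'S_h} :=
  [set s : 'S_h | [forall B in P, (fun x => s x) @: B == B]].

Definition contains_cis_k (h k : nat) (V : {set 'S_h}) : Prop :=
  exists P : {set {set 'I_h}},
    [/\ partition P [set: 'I_h], #|P| = k & complete_intransitive P \subset V].

(* Main.v *)
Require Import Defs.
From mathcomp Require Import all_boot all_fingroup.
Set Implicit Arguments. Unset Strict Implicit. Unset Printing Implicit Defensive.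
Import GroupScope.
Local Notation act := Defs.act.

Lemma inj_blocks (h n : nat) (P : {set {set 'I_h}}) :
  #|P| <= n`! -> exists f : {set 'I_h} -> 'S_n, {in P &, injective f}.
Proof.
move=> hP.
pose e := enum P.
exists (fun B => nth 1%g (enum [set: 'S_n]) (index B e)).
move=> A B hA hB /= E.
have sz : size (enum [set: 'S_n]) = n`! by rewrite -cardE cardsT card_Sn.
have iA : index A e < size e by rewrite index_mem mem_enum.
have iB : index B e < size e by rewrite index_mem mem_enum.
have se : size e = #|P| by rewrite cardE.
move/uniqP: (enum_uniq (pred_of_set [set: 'S_n])) => U.
have iA' : index A e \in gtn (size (enum [set: 'S_n])) by rewrite inE sz (leq_trans iA) // se.
have iB' : index B e \in gtn (size (enum [set: 'S_n])) by rewrite inE sz (leq_trans iB) // se.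
have EI := U 1%g _ _ iA' iB' E.
have mA : A \in e by rewrite mem_enum.
have mB : B \in e by rewrite mem_enum.
by rewrite -(nth_index A mA) EI nth_index.
Qed.

Lemma act1E (h n : nat) (phi : 'S_h) (p : profile h n) i :
  act phi 1 p i = p (phi^-1 i).
Proof. by rewrite /Defs.act ffunE /Defs.pcomp mulg1. Qed.

Lemma actM (h n : nat) (phi psi : 'S_h) (p : profile h n) :
  act phi 1 (act psi 1 p) = act (psi * phi) 1 p.
Proof. by apply/ffunP => i; rewrite !act1E invMg permM. Qed.

Lemma act_id (h n : nat) (p : profile h n) : act 1 1 p = p.
Proof. by apply/ffunP => i; rewrite act1E invg1 perm1. Qed.

Theorem mainTheorem3 (h n k : nat) (V : {group 'S_h}) :
  2 <= h -> 2 <= n -> 2 <= k -> k <= minn h n`! ->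
  contains_cis_k k V ->
  is_anonymity_group (setX V [set 1%g] : {set 'S_h * 'S_n}).
Proof.
move=> _ hn _ hk [P [partP cardP sub]].
have [f finj] : exists f : {set 'I_h} -> 'S_n, {in P &, injective f}.
  by apply: inj_blocks; rewrite cardP; move: hk; rewrite leq_min => /andP[].
pose p0 : profile h n := [ffun i => f (pblock P i)].
have stab : forall phi : 'S_h, act phi 1 p0 = p0 -> phi \in V.
  move=> phi E; apply: (subsetP sub); rewrite inE; apply/forallP => B.
  apply/implyP => BP.
  have cov : cover P = [set: 'I_h] by case/and3P: partP => /eqP.
  have pbP : forall x, pblock P x \in P.
    by move=> x; rewrite pblock_mem // cov inE.
  have key : forall x, pblock P (phi x) = pblock P x.
    move=> x; have := congr1 (fun q : profile h n => q (phi x)) E.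
    rewrite /= act1E !ffunE permK => /finj -> //.
  have trivP : trivIset P by case/and3P: partP.
  have sB : (fun x => phi x) @: B \subset B.
    apply/subsetP => y /imsetP [x xB ->].
    have -> : B = pblock P x by rewrite (def_pblock trivP BP xB).
    rewrite -key mem_pblock cov inE //.
  rewrite eqEcard sB /= card_imset //; exact: perm_inj.
pose a : 'I_n := Ordinal (leq_trans (isT : 0 < 2) hn).
pose b : 'I_n := Ordinal hn.
have ab : a != b by [].
pose sig := tperm a b.
have sig1 : sig != 1.
  apply/eqP => /permP /(_ a); rewrite tpermL perm1 => /eqP; by rewrite eq_sym (negbTE ab).
pose O := [set act v 1 p0 | v in V].
exists (fun p => if p \in O then sig else 1).
have inO : forall (phi : 'S_h) p, phi \in V -> p \in O -> act phi 1 p \in O.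
  move=> phi p phiV /imsetP [v vV ->]; rewrite actM; apply/imsetP.
  by exists (v * phi); rewrite ?groupM.
apply/setP => [[phi psi]]; rewrite !inE /=.
apply/andP/andP => [[phiV /eqP ->]|[/forallP F /eqP psi1]].
  split=> //; apply/forallP => p /=; rewrite /Defs.pcomp. set q := (if p \in O then _ else _); rewrite (mulg1 q).
  case: (boolP (p \in O)) => pO; first by rewrite /q pO (inO _ _ phiV pO).
  case: (boolP (act phi 1 p \in O)) => [H|_]; last by rewrite /q (negbTE pO).
  have := inO _ _ (groupVr phiV) H; rewrite actM mulgV act_id (negbTE pO) //.
split=> //; subst psi.
have := F p0; rewrite /Defs.pcomp /=; set q := (if p0 \in O then _ else _); rewrite (mulg1 q) /q.
have p0O : p0 \in O by apply/imsetP; exists 1%g; rewrite ?group1 ?act_id.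
rewrite p0O; case: ifP => [/imsetP [v vV E] _|_ /eqP]; last by move=> E; move: sig1; rewrite E eqxx.
have : act v^-1 1 (act phi 1 p0) = p0 by rewrite E actM mulgV act_id.
rewrite actM => /stab H.
  by rewrite -(mulgKV v phi) groupM.
by [].
Qed.
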